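(* Consider the setting in the context with $\rho>0$, symmetric $P_i,Q_i\in\mathbb{R}^{n\times n}$, and let $(\check{\bm{W}}^*,\hat{\bm{W}}^*,\lambda^* )$ be a KKT point of (P1), $\bm{Z}^*=(\check{\bm{W}}^*,\hat{\bm{W}}^* )$. If $\bm{G}_1^{\dagger}\succ0$, $\bm{G}_2\succ\bm{G}_3$, $0<\gamma<2$ and $\lambda^0=\bm{0}$, then for every $k\ge1$ $$\bm{F}(\overline{\bm{Z}}^k)-\bm{F}(\bm{Z}^* )\le\frac1{2k}\Big(\|\check{\bm{W}}^0-\check{\bm{W}}^*\|^2_{\bm{G}_1^{\dagger}}+\|\hat{\bm{W}}^0-\hat{\bm{W}}^*\|^2_{\bm{G}_2}\Big),\qquad \overline{\bm{Z}}^k=\frac1k\sum_{j=1}^k\bm{Z}^j,$$ where $\bm{Z}^j=(\check{\bm{W}}^j,\hat{\bm{W}}^j)$ are the iterates of the algorithm.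
   Context: Let $\mathcal{G}=(\mathcal{V},\mathcal{E})$ be a connected undirected graph with $\mathcal{V}=\{1,\dots,N\}$, $N\ge 2$, and let $d_i$ be the degree of $i$. Variables are $\check{\bm{w}}_i,\hat{\bm{w}}_i\in\mathbb{R}^n$; write $\check{\bm{W}}=(\check{\bm{w}}_1,\dots,\check{\bm{w}}_N)$, $\hat{\bm{W}}$ likewise, $\bm{z}_i=(\check{\bm{w}}_i,\hat{\bm{w}}_i)$, $\bm{Z}=(\check{\bm{W}},\hat{\bm{W}})$. The matrix $\bm{A}\in\mathbb{R}^{|\mathcal{E}|n\times Nn}$ has one block row per edge $\{i,j\}$ ($i<j$) with $I_n$ in block column $i$, $-I_n$ in block column $j$, zeros elsewhere; $A_i$ is its $i$-th block column, so $A_i^TA_i=d_iI_n$. Each $f_i:\mathbb{R}^n\times\mathbb{R}^n\to\mathbb{R}$ is differentiable, jointly convex, with $\nabla f_i$ Lipschitz with constant $C_i$. Let $\mu_1\ge0$, $\mu_2>0$, $F_i(\bm{z}_i)=f_i(\check{\bm{w}}_i,\hat{\bm{w}}_i)+\frac{\mu_1}{2}\|\check{\bm{w}}_i\|^2+\frac{\mu_2}{2}\|\hat{\bm{w}}_i\|^2$, $\bm{F}(\bm{Z})=\sum_iF_i(\bm{z}_i)$, and $m$ a constant with $0<m\le\mu_2$. Problem (P1): minimize $\bm{F}(\bm{Z})$ s.t. $\bm{A}\check{\bm{W}}=0$; a KKT point is $(\check{\bm{W}}^*,\hat{\bm{W}}^*,\lambda^* )$ with $\bm{A}\check{\bm{W}}^*=0$,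 $A_i^T\lambda^*=\nabla_{\check{\bm{w}}_i}F_i(\bm{z}_i^* )$, $\nabla_{\hat{\bm{w}}_i}F_i(\bm{z}_i^* )=0$. Algorithm: with $\mathcal{L}_\rho=\bm{F}(\bm{Z})-\lambda^T\bm{A}\check{\bm{W}}+\frac\rho2\|\bm{A}\check{\bm{W}}\|^2$, from arbitrary $\check{\bm{W}}^0,\hat{\bm{W}}^0$ and given $\lambda^0$, for $k=0,1,\dots$: (i) for all $i$ in parallel $\check{\bm{w}}_i^{k+1}=\arg\min_{\check{\bm{w}}_i}\mathcal{L}_\rho(\check{\bm{w}}_i,\check{\bm{W}}^k_{-i},\hat{\bm{W}}^k,\lambda^k)+\frac12\|\check{\bm{w}}_i-\check{\bm{w}}_i^k\|^2_{P_i}$; (ii) $\lambda^{k+1}=\lambda^k-\gamma\rho\bm{A}\check{\bm{W}}^{k+1}$; (iii) for all $i$ in parallel $\hat{\bm{w}}_i^{k+1}=\arg\min_{\hat{\bm{w}}_i}F_i(\check{\bm{w}}_i^{k+1},\hat{\bm{w}}_i)+\frac12\|\hat{\bm{w}}_i-\hat{\bm{w}}_i^k\|^2_{Q_i}$. Notation: $\|x\|^2_S=x^TSx$; $\bm{G}_1=\mathrm{blkdiag}(\rho d_iI_n+P_i)_i$, $\bm{G}_1^{\dagger}=\bm{G}_1-\rho\bm{A}^T\bm{A}$, $\bm{G}_2=\mathrm{blkdiag}(Q_i)_i$, $\bm{G}_3=\mathrm{blkdiag}\big(\frac{C_i}{m}(C_i+m)I_n\big)_i$. *)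

(* Defs.v *)
From HB Require Import structures.
From mathcomp Require Import all_boot all_order all_algebra.
From mathcomp Require Import all_classical all_reals all_analysis.
Set Implicit Arguments. Unset Strict Implicit. Unset Printing Implicit Defensive.
Import Order.TTheory GRing.Theory Num.Theory.
Import numFieldNormedType.Exports.
Local Open Scope ring_scope.

Section Defs.
Variable R : realType.

Definition dotv n (u v : 'rV[R]_n) : R := \sum_(j < n) u ord0 j * v ord0 j.
Definition sqnorm n (v : 'rV[R]_n) : R := dotv v v.
Definition qf n (S : 'M[R]_n) (v : 'rV[R]_n) : R := (v *m S *m v^T) ord0 ord0.

Definition has_gradient n (f : 'rV[R]_n * 'rV[R]_n -> R)
  (gc gh : 'rV[R]_n * 'rV[R]_n -> 'rV[R]_n) : Prop :=
  forall z, differentiable f z /\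
    forall v, 'd f z v = dotv (gc z) v.1 + dotv (gh z) v.2.

Definition jointly_convex n (f : 'rV[R]_n * 'rV[R]_n -> R) : Prop :=
  forall (z1 z2 : 'rV[R]_n * 'rV[R]_n) (t : R), 0 <= t -> t <= 1 ->
    f (t *: z1 + (1 - t) *: z2) <= t * f z1 + (1 - t) * f z2.

Definition grad_lipschitz n (gc gh : 'rV[R]_n * 'rV[R]_n -> 'rV[R]_n) (C : R) :=
  forall z z' : 'rV[R]_n * 'rV[R]_n,
    Num.sqrt (sqnorm (gc z - gc z') + sqnorm (gh z - gh z'))
    <= C * Num.sqrt (sqnorm (z.1 - z'.1) + sqnorm (z.2 - z'.2)).

Definition edge N (e : rel 'I_N) :=
  {p : 'I_N * 'I_N | ((val p.1 < val p.2)%N && e p.1 p.2)}.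

Definition degree N (e : rel 'I_N) (i : 'I_N) : nat := #|[set j | e i j]|.

Variables (N n : nat) (e : rel 'I_N).

(* the edge-node incidence operator A (block row per edge {i,j}, i<j:
   I_n in block column i, -I_n in block column j) and its adjoint *)
Definition Aop (W : 'I_N -> 'rV[R]_n) : edge e -> 'rV[R]_n :=
  fun p => W (val p).1 - W (val p).2.
Definition ATop (lam : edge e -> 'rV[R]_n) (i : 'I_N) : 'rV[R]_n :=
  \sum_(p : edge e | (val p).1 == i) lam p - \sum_(p : edge e | (val p).2 == i) lam p.
Definition sqnormE (u : edge e -> 'rV[R]_n) : R := \sum_(p : edge e) sqnorm (u p).
Definition dotE (u v : edge e -> 'rV[R]_n) : R := \sum_(p : edge e) dotv (u p) (v p).

Variables (f : 'I_N -> 'rV[R]_n * 'rV[R]_n -> R) (mu1 mu2 : R).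

Definition Floc (i : 'I_N) (z : 'rV[R]_n * 'rV[R]_n) : R :=
  f i z + mu1 / 2 * sqnorm z.1 + mu2 / 2 * sqnorm z.2.
Definition Ftot (Wc Wh : 'I_N -> 'rV[R]_n) : R := \sum_i Floc i (Wc i, Wh i).

Variable rho : R.

Definition Lrho (Wc Wh : 'I_N -> 'rV[R]_n) (lam : edge e -> 'rV[R]_n) : R :=
  Ftot Wc Wh - dotE lam (Aop Wc) + rho / 2 * sqnormE (Aop Wc).

(* ||W||^2_{G1^dagger}, G1^dagger = blkdiag(rho d_i I + P_i) - rho A^T A *)
Definition G1dag_q (P : 'I_N -> 'M[R]_n) (W : 'I_N -> 'rV[R]_n) : R :=
  \sum_i (rho * (degree e i)%:R * sqnorm (W i) + qf (P i) (W i))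
  - rho * sqnormE (Aop W).
Definition G2_q (Q : 'I_N -> 'M[R]_n) (W : 'I_N -> 'rV[R]_n) : R :=
  \sum_i qf (Q i) (W i).
Definition G3_q (C : 'I_N -> R) (m : R) (W : 'I_N -> 'rV[R]_n) : R :=
  \sum_i (C i / m * (C i + m)) * sqnorm (W i).

Definition upd (W : 'I_N -> 'rV[R]_n) (i : 'I_N) (x : 'rV[R]_n) : 'I_N -> 'rV[R]_n :=
  fun j => if j == i then x else W j.

Definition avg (W : nat -> 'I_N -> 'rV[R]_n) (k : nat) : 'I_N -> 'rV[R]_n :=
  fun i => k%:R^-1 *: \sum_(1 <= j < k.+1) W j i.

End Defs.

Arguments Aop {R N n} e W _.
Arguments ATop {R N n} e lam i.
Arguments sqnormE {R N n} e u.
Arguments dotE {R N n} e u v.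
Arguments Lrho {R N n} e f mu1 mu2 rho Wc Wh lam.

(* Main.v *)
Require Import Defs.
From HB Require Import structures.
From mathcomp Require Import all_boot all_order all_algebra.
From mathcomp Require Import all_classical all_reals all_analysis.
Import Order.TTheory GRing.Theory Num.Theory.
Import numFieldNormedType.Exports.
Local Open Scope ring_scope.

From mathcomp Require Import lra ring.
Set Implicit Arguments. Unset Strict Implicit.


Section Vec.
Variables (R : realType) (n : nat).
Implicit Types (u v w : 'rV[R]_n) (a b : R).

Lemma dotvC u v : dotv u v = dotv v u.
Proof. by apply: eq_bigr => j _; rewrite mulrC. Qed.
Lemma dotvDl u w v : dotv (u + w) v = dotv u v + dotv w v.
Proof. by rewrite /dotv -big_split; apply: eq_bigr => j _; rewrite mxE mulrDl. Qed.
Lemma dotvNl u v : dotv (- u) v = - dotv u v.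
Proof. by rewrite /dotv -sumrN; apply: eq_bigr => j _; rewrite mxE mulNr. Qed.
Lemma dotvZl a u v : dotv (a *: u) v = a * dotv u v.
Proof. by rewrite /dotv mulr_sumr; apply: eq_bigr => j _; rewrite mxE mulrA. Qed.
Lemma dotvBl u w v : dotv (u - w) v = dotv u v - dotv w v.
Proof. by rewrite dotvDl dotvNl. Qed.
Lemma dotvDr u v w : dotv u (v + w) = dotv u v + dotv u w.
Proof. by rewrite dotvC dotvDl !(dotvC u). Qed.
Lemma dotvNr u v : dotv u (- v) = - dotv u v.
Proof. by rewrite dotvC dotvNl dotvC. Qed.
Lemma dotvBr u v w : dotv u (v - w) = dotv u v - dotv u w.
Proof. by rewrite dotvDr dotvNr. Qed.
Lemma dotvZr a u v : dotv u (a *: v) = a * dotv u v.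
Proof. by rewrite dotvC dotvZl dotvC. Qed.
Lemma dotv0l v : dotv 0 v = 0.
Proof. by rewrite /dotv big1 // => j _; rewrite mxE mul0r. Qed.
Lemma dotv0r v : dotv v 0 = 0.
Proof. by rewrite dotvC dotv0l. Qed.
Lemma sqnorm_ge0 v : 0 <= sqnorm v.
Proof. by apply: sumr_ge0 => j _; rewrite -expr2 sqr_ge0. Qed.
Lemma sqnorm_eq0 v : sqnorm v = 0 -> v = 0.
Proof.
move=> /eqP; rewrite psumr_eq0; last by move=> j _; rewrite -expr2 sqr_ge0.
move=> /allP H; apply/rowP => j; rewrite mxE.
have := H j (mem_index_enum j); rewrite /= mulf_eq0 orbb => /eqP //.
Qed.
Lemma sqnormD u v : sqnorm (u + v) = sqnorm u + 2 * dotv u v + sqnorm v.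
Proof. by rewrite /sqnorm !dotvDl !dotvDr (dotvC v u); ring. Qed.
Lemma sqnormB u v : sqnorm (u - v) = sqnorm u - 2 * dotv u v + sqnorm v.
Proof. by rewrite /sqnorm !dotvBl !dotvBr (dotvC v u); ring. Qed.
Lemma sqnormN u : sqnorm (- u) = sqnorm u.
Proof. by rewrite /sqnorm dotvNl dotvNr opprK. Qed.
Lemma sqnormZ a u : sqnorm (a *: u) = a ^+ 2 * sqnorm u.
Proof. by rewrite /sqnorm dotvZl dotvZr mulrA expr2. Qed.
Lemma sqnorm0 : sqnorm (0 : 'rV[R]_n) = 0.
Proof. by rewrite /sqnorm dotv0l. Qed.

Lemma dot_cs u v : dotv u v <= Num.sqrt (sqnorm u) * Num.sqrt (sqnorm v).
Proof.
set a := Num.sqrt (sqnorm u); set b := Num.sqrt (sqnorm v).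
have a0 : 0 <= a by exact: sqrtr_ge0.
have b0 : 0 <= b by exact: sqrtr_ge0.
have ea : a ^+ 2 = sqnorm u by rewrite sqr_sqrtr // sqnorm_ge0.
have eb : b ^+ 2 = sqnorm v by rewrite sqr_sqrtr // sqnorm_ge0.
have := sqnorm_ge0 (b *: u - a *: v).
rewrite sqnormB !sqnormZ dotvZl dotvZr -ea -eb => H.
have [ab0|] := ltrP 0 (a * b).
  have : 0 <= (a * b) * (a * b - dotv u v) by nra.
  by rewrite pmulr_rge0 // subr_ge0.
move=> ab.
have : a * b = 0 by apply/le_anti; rewrite ab mulr_ge0.
move/eqP; rewrite mulf_eq0 => /orP[] /eqP z.
  have : sqnorm u = 0 by rewrite -ea z expr2 mul0r.
  by move/sqnorm_eq0 ->; rewrite dotv0l z mul0r.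
have : sqnorm v = 0 by rewrite -eb z expr2 mul0r.
by move/sqnorm_eq0 ->; rewrite dotv0r z mulr0.
Qed.

Definition bf (S : 'M[R]_n) u v : R := (u *m S *m v^T) ord0 ord0.
Lemma bfDl S u w v : bf S (u + w) v = bf S u v + bf S w v.
Proof. by rewrite /bf !mulmxDl mxE. Qed.
Lemma bfNl S u v : bf S (- u) v = - bf S u v.
Proof. by rewrite /bf !mulNmx mxE. Qed.
Lemma bfBl S u w v : bf S (u - w) v = bf S u v - bf S w v.
Proof. by rewrite bfDl bfNl. Qed.
Lemma bfZl S a u v : bf S (a *: u) v = a * bf S u v.
Proof. by rewrite /bf -!scalemxAl mxE. Qed.
Lemma bfC S u v : S^T = S -> bf S u v = bf S v u.
Proof.
move=> sS; rewrite /bf -[in LHS](trmxK (u *m S *m v^T)) mxE.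
by rewrite !trmx_mul trmxK sS mulmxA.
Qed.
Lemma qfE S u : qf S u = bf S u u.
Proof. by []. Qed.
Lemma bf0l S v : bf S 0 v = 0.
Proof. by rewrite /bf !mul0mx mxE. Qed.

End Vec.

Section Vec2.
Variables (R : realType) (n : nat).
Implicit Types (u v w : 'rV[R]_n) (a b : R) (S : 'M[R]_n).
Lemma bfDr S u v w : S^T = S -> bf S u (v + w) = bf S u v + bf S u w.
Proof. by move=> sS; rewrite !(bfC u) // bfDl. Qed.
Lemma bfZr S a u v : S^T = S -> bf S u (a *: v) = a * bf S u v.
Proof. by move=> sS; rewrite !(bfC u) // bfZl. Qed.
Lemma bfNr S u v : S^T = S -> bf S u (- v) = - bf S u v.
Proof. by move=> sS; rewrite !(bfC u) // bfNl. Qed.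
Lemma bfBr S u v w : S^T = S -> bf S u (v - w) = bf S u v - bf S u w.
Proof. by move=> sS; rewrite bfDr // bfNr. Qed.
Lemma qfD S u v : S^T = S -> qf S (u + v) = qf S u + 2 * bf S u v + qf S v.
Proof. by move=> sS; rewrite !qfE bfDl !bfDr // (bfC v u) //; ring. Qed.
Lemma qfZ S a u : qf S (a *: u) = a ^+ 2 * qf S u.
Proof.
rewrite /qf -!scalemxAl linearZ /= -scalemxAr !mxE expr2 -mulrA.
by congr (_ * _); rewrite -scalemxAl mxE.
Qed.
Lemma qf0 S : qf S 0 = 0.
Proof. by rewrite qfE bf0l. Qed.
End Vec2.

Section Vec3.
Variables (R : realType) (n : nat).
Implicit Types (u v w z : 'rV[R]_n) (a b : R) (S : 'M[R]_n).
Lemma qfN S u : qf S (- u) = qf S u.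
Proof. by rewrite -scaleN1r qfZ sqrrN expr1n mul1r. Qed.
Lemma threept S u v z : S^T = S ->
  2 * bf S (u - v) (u - z) = qf S (u - v) + qf S (u - z) - qf S (v - z).
Proof.
move=> sS.
have -> : v - z = (u - z) + - (u - v) by rewrite opprB [RHS]addrC addrA subrK.
rewrite (qfD (u - z) (- (u - v)) sS) qfN (bfNr _ _ sS) (bfC (u - z) (u - v) sS); ring.
Qed.
Lemma sqnormBC u v : sqnorm (u - v) = sqnorm (v - u).
Proof. by rewrite -sqnormN opprB. Qed.
End Vec3.

Local Open Scope classical_set_scope.
Lemma dir_lb {R : realType} {V : normedModType R} (f : V -> R) (z w : V) (a b : R) :
  differentiable f z ->
  (forall t, 0 < t -> t <= 1 -> a * t - b * t ^+ 2 <= f (z + t *: w) - f z) ->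
  a <= 'd f z w.
Proof.
move=> df H.
have dv := diff_derivable (v:=w) df.
rewrite -deriveE //.
set q := fun h : R => h^-1 *: ((f \o shift z) (h *: w) - f z).
have cq : q @ 0^' --> 'D_w f z by exact: dv.
have cq' : q @ 0^'+ --> 'D_w f z.
  move=> A /cq /nbhs_ballP [_ /posnumP[e] xe_A].
  by exists e%:num => //= y xe_y; rewrite lt_def => /andP [xney _]; apply: xe_A.
have cg : (fun h => q h + b * h) @ 0^'+ --> 'D_w f z + b * 0.
  apply: cvgD => //; apply: cvgMr; exact: cvg_at_right_filter (cvg_id).
rewrite mulr0 addr0 in cg.
apply: (cvgr_to_ge cg).
near=> h.
have h0 : 0 < h by near: h; exact: nbhs_right_gt.
have h1 : h <= 1 by near: h; exact: nbhs_right_ltW.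
have := H h h0 h1.
rewrite /q /= [h *: w + z]addrC.
have hi : 0 < h^-1 by rewrite invr_gt0.
rewrite -(ler_pM2l hi) => Hh.
rewrite -lerBlDr; apply: le_trans Hh.
have -> : h^-1 * (a * h - b * h ^+ 2) = a - b * h.
  by field; rewrite gt_eqF.
done.
Unshelve. all: by end_near.
Qed.

Lemma dir_ub {R : realType} {V : normedModType R} (f : V -> R) (z w : V) (c b : R) :
  differentiable f z ->
  (forall t, 0 < t -> t <= 1 -> f (z + t *: w) - f z <= c * t + b * t ^+ 2) ->
  'd f z w <= c.
Proof.
move=> df H.
have dv := diff_derivable (v:=w) df.
rewrite -deriveE //.
set q := fun h : R => h^-1 *: ((f \o shift z) (h *: w) - f z).
have cq : q @ 0^' --> 'D_w f z by exact: dv.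
have cq' : q @ 0^'+ --> 'D_w f z.
  move=> A /cq /nbhs_ballP [_ /posnumP[e] xe_A].
  by exists e%:num => //= y xe_y; rewrite lt_def => /andP [xney _]; apply: xe_A.
have cg : (fun h => q h - b * h) @ 0^'+ --> 'D_w f z - b * 0.
  apply: cvgB => //; apply: cvgMr; exact: cvg_at_right_filter (cvg_id).
rewrite mulr0 subr0 in cg.
apply: (cvgr_to_le cg).
near=> h.
have h0 : 0 < h by near: h; exact: nbhs_right_gt.
have h1 : h <= 1 by near: h; exact: nbhs_right_ltW.
have := H h h0 h1.
rewrite /q /= [h *: w + z]addrC.
have hi : 0 < h^-1 by rewrite invr_gt0.
rewrite -(ler_pM2l hi) => Hh.
rewrite lerBlDr; apply: le_trans Hh _.
have -> : h^-1 * (c * h + b * h ^+ 2) = c + b * h.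
  by field; rewrite gt_eqF.
done.
Unshelve. all: by end_near.
Qed.
Lemma line_derive {R : realType} {V : normedModType R} (f : V -> R) (z w : V) (t : R) :
  differentiable f (z + t *: w) ->
  is_derive t 1 (fun s : R => f (z + s *: w)) ('d f (z + t *: w) w).
Proof.
move=> df.
have E : (fun h : R => h^-1 *: (((fun s : R => f (z + s *: w)) \o shift t) (h *: 1) - f (z + t *: w)))
   = (fun h : R => h^-1 *: ((f \o shift (z + t *: w)) (h *: w) - f (z + t *: w))).
  apply/funext => h /=; congr (_ *: (f _ - _)).
  by rewrite [h *: 1]mulr1 scalerDl addrCA addrA.
have dv := diff_derivable (v:=w) df.
split.
  by rewrite /derivable E; exact: dv.
by rewrite /derive E -/(derive f (z + t *: w) w) deriveE.
Qed.

Lemma descent {R : realType} {V : normedModType R} (f : V -> R) (z w : V) (d0 K : R) :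
  (forall t, differentiable f (z + t *: w)) ->
  (forall t, 0 <= t -> t <= 1 -> 'd f (z + t *: w) w - d0 <= K * t) ->
  f (z + w) - f z <= d0 + K / 2.
Proof.
move=> df H.
pose g := fun s : R => f (z + s *: w).
pose p : {poly R} := d0 *: 'X + (K / 2) *: 'X^2.
pose h := g - horner p.
have dh : forall t : R, is_derive t (1:R) h ('d f (z + t *: w) w - p^`().[t]).
  move=> t; apply: is_deriveB; first exact: line_derive.
have hd : forall t : R, derivable h t 1 by move=> t; case: (dh t).
have hle : {in `[0, 1]%R &, {homo h : x y /~ x <= y}}.
  apply: ler0_derive1_le_cc.
  - by move=> x _; exact: hd.
  - move=> x; rewrite in_itv /= => /andP[x0 x1].
    case: (dh x) => _ E; rewrite derive1E E.
    rewrite /p !poly.derivE !hornerE /=.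
    have := H x (ltW x0) (ltW x1). lra.
  - apply: derivable_within_continuous => x _; exact: hd.
have := hle 1 0.
rewrite !in_itv /= !lexx ler01 => /(_ isT isT isT).
rewrite /h /g /p /= !fctE !hornerE scale0r addr0 scale1r.
rewrite /= !mulr1 !mulr0 subr0; lra.
Qed.

Local Close Scope classical_set_scope.


Section Fg.
Variables (R : realType) (n : nat).
Variables (f : 'rV[R]_n * 'rV[R]_n -> R) (gc gh : 'rV[R]_n * 'rV[R]_n -> 'rV[R]_n) (C : R).
Hypothesis hg : has_gradient f gc gh.

Lemma grad_conv : jointly_convex f -> forall z z',
  dotv (gc z) (z'.1 - z.1) + dotv (gh z) (z'.2 - z.2) <= f z' - f z.
Proof.
move=> cv z z'.
have [df dE] := hg z.
have := dE (z' - z); rewrite /= => <-.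
apply: (@dir_ub _ _ f z (z' - z) (f z' - f z) 0 df) => t t0 t1.
have := cv z' z t (ltW t0) t1.
have -> : t *: z' + (1 - t) *: z = z + t *: (z' - z).
  by rewrite scalerBl scale1r scalerBr addrCA addrA.
move=> h; rewrite mul0r addr0; lra.
Qed.

Lemma lip_dot (z z' : 'rV[R]_n * 'rV[R]_n) (w : 'rV[R]_n) :
  grad_lipschitz gc gh C ->
  dotv (gh z - gh z') w <=
  C * Num.sqrt (sqnorm (z.1 - z'.1) + sqnorm (z.2 - z'.2)) * Num.sqrt (sqnorm w).
Proof.
move=> L; apply: (le_trans (dot_cs _ _)).
apply: ler_wpM2r; first exact: sqrtr_ge0.
apply: (le_trans _ (L z z')).
rewrite ler_sqrt; last by rewrite addr_ge0 // sqnorm_ge0.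
by rewrite lerDr sqnorm_ge0.
Qed.

Lemma descent_y x y y' : grad_lipschitz gc gh C ->
  f (x, y') - f (x, y) <= dotv (gh (x, y)) (y' - y) + C / 2 * sqnorm (y' - y).
Proof.
move=> L.
have := @descent R _ f (x, y) (0, y' - y) (dotv (gh (x, y)) (y' - y)) (C * sqnorm (y' - y)).
have -> : (x, y) + (0, y' - y) = (x, y').
  by congr pair; rewrite /= ?addr0 // addrC subrK.
rewrite mulrAC; apply.
  by move=> t; case: (hg ((x, y) + t *: (0, y' - y))).
move=> t t0 t1.
case: (hg ((x, y) + t *: (0, y' - y))) => _ ->.
rewrite /= dotv0r add0r -dotvBl.
apply: (le_trans (lip_dot _ _ _ L)).
rewrite /= scaler0 addr0 subrr sqnorm0 add0r addrAC subrr add0r sqnormZ.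
rewrite sqrtrM ?sqr_ge0 // sqrtr_sqr ger0_norm //.
have s0 : 0 <= sqnorm (y' - y) by exact: sqnorm_ge0.
have : Num.sqrt (sqnorm (y' - y)) ^+ 2 = sqnorm (y' - y) by rewrite sqr_sqrtr.
move=> E; rewrite -{3}E expr2; lra.
Qed.

End Fg.


Section Node.
Variables (R : realType) (N n : nat) (e : rel 'I_N).
Variables (f : 'I_N -> 'rV[R]_n * 'rV[R]_n -> R) (mu1 mu2 rho : R).
Implicit Types (W Y : 'I_N -> 'rV[R]_n) (xi v : 'rV[R]_n) (t : R).

Lemma ystep i (gc gh : 'rV[R]_n * 'rV[R]_n -> 'rV[R]_n) (Q : 'M[R]_n) x y y' u :
  has_gradient (f i) gc gh -> Q^T = Q ->
  (forall y0, Floc f mu1 mu2 i (x, y') + qf Q (y' - y) / 2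
              <= Floc f mu1 mu2 i (x, y0) + qf Q (y0 - y) / 2) ->
  - (mu2 * dotv y' u + bf Q (y' - y) u) <= dotv (gh (x, y')) u.
Proof.
move=> hg sQ H.
have [df dE] := hg (x, y').
have := dE (0, u); rewrite /= dotv0r add0r => <-.
apply: (@dir_lb _ _ (f i) (x, y') (0, u) _ (mu2 / 2 * sqnorm u + qf Q u / 2) df).
move=> t t0 t1.
have := H (y' + t *: u).
have -> : (x, y') + t *: (0, u) = (x, y' + t *: u).
  by congr pair; rewrite /= scaler0 addr0.
rewrite /Floc /= sqnormD sqnormZ dotvZr.
have -> : y' + t *: u - y = (y' - y) + t *: u by rewrite addrAC.
rewrite (qfD (y' - y) (t *: u) sQ) qfZ (bfZr _ _ _ sQ). lra.
Qed.

Definition cc (i : 'I_N) (p : edge e) : R :=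
  ((val p).1 == i)%:R - ((val p).2 == i)%:R.

Lemma Aop_upd (W : 'I_N -> 'rV[R]_n) i xi v t p :
  Aop e (upd W i (xi + t *: v)) p = Aop e (upd W i xi) p + (t * cc i p) *: v.
Proof.
rewrite /Aop /upd /cc.
case: ((val p).1 == i); case: ((val p).2 == i) => /=;
  rewrite ?subrr ?mulr0 ?scale0r ?addr0 ?subr0 ?mulr1 ?sub0r ?mulrN1 ?scaleNr.
- by [].
- by rewrite addrAC.
- by rewrite opprD addrA.
- by [].
Qed.

Lemma Ftot_upd (Y W : 'I_N -> 'rV[R]_n) i a b :
  Ftot f mu1 mu2 (upd W i a) Y - Ftot f mu1 mu2 (upd W i b) Y
  = Floc f mu1 mu2 i (a, Y i) - Floc f mu1 mu2 i (b, Y i).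
Proof.
rewrite /Ftot (bigD1 i) //= [X in _ - X](bigD1 i) //= /upd eqxx.
rewrite (eq_bigr (fun j => Floc f mu1 mu2 j (W j, Y j))); last by move=> j /negPf ->.
rewrite [X in _ - (_ + X)](eq_bigr (fun j => Floc f mu1 mu2 j (W j, Y j))); last by move=> j /negPf ->.
by rewrite opprD addrACA subrr addr0.
Qed.

Lemma dotE_upd (lam : edge e -> 'rV[R]_n) W i xi v t :
  dotE e lam (Aop e (upd W i (xi + t *: v)))
  = dotE e lam (Aop e (upd W i xi)) + t * \sum_p cc i p * dotv (lam p) v.
Proof.
rewrite /dotE mulr_sumr -big_split; apply: eq_bigr => p _.
by rewrite Aop_upd dotvDr dotvZr mulrA.
Qed.

Lemma sqnormE_upd W i xi v t :
  sqnormE e (Aop e (upd W i (xi + t *: v)))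
  = sqnormE e (Aop e (upd W i xi))
    + 2 * t * \sum_p cc i p * dotv (Aop e (upd W i xi) p) v
    + t ^+ 2 * \sum_p cc i p ^+ 2 * sqnorm v.
Proof.
rewrite /sqnormE !mulr_sumr -!big_split; apply: eq_bigr => p _.
rewrite Aop_upd sqnormD sqnormZ dotvZr /=; ring.
Qed.

Lemma xstep i (gc gh : 'rV[R]_n * 'rV[R]_n -> 'rV[R]_n) (P : 'M[R]_n)
   (W Y : 'I_N -> 'rV[R]_n) (lam : edge e -> 'rV[R]_n) xi v :
  has_gradient (f i) gc gh -> P^T = P ->
  (forall x, Lrho e f mu1 mu2 rho (upd W i xi) Y lam + qf P (xi - W i) / 2
          <= Lrho e f mu1 mu2 rho (upd W i x) Y lam + qf P (x - W i) / 2) ->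
  - (mu1 * dotv xi v - \sum_p cc i p * dotv (lam p) v
     + rho * \sum_p cc i p * dotv (Aop e (upd W i xi) p) v
     + bf P (xi - W i) v) <= dotv (gc (xi, Y i)) v.
Proof.
move=> hg sP H.
have [df dE] := hg (xi, Y i).
have := dE (v, 0); rewrite /= dotv0r addr0 => <-.
apply: (@dir_lb _ _ (f i) (xi, Y i) (v, 0) _
   (mu1 / 2 * sqnorm v + rho / 2 * \sum_p cc i p ^+ 2 * sqnorm v + qf P v / 2) df).
move=> t t0 t1.
have := H (xi + t *: v).
have -> : (xi, Y i) + t *: (v, 0) = (xi + t *: v, Y i).
  by congr pair; rewrite /= scaler0 addr0.
rewrite /Lrho dotE_upd sqnormE_upd.
have FE := Ftot_upd Y W i (xi + t *: v) xi.
have -> : xi + t *: v - W i = (xi - W i) + t *: v by rewrite addrAC.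
rewrite (qfD (xi - W i) (t *: v) sP) qfZ (bfZr _ _ _ sP).
move: FE; rewrite /Floc /= sqnormD sqnormZ dotvZr.
set S1 := \sum_p _. set S2 := \sum_p _. set S3 := \sum_p _.
set F1 := Ftot _ _ _ _ _. set F2 := Ftot _ _ _ _ _.
move=> FE; nra.
Qed.

End Node.
Arguments cc {R N e} i p.


Section Sums.
Variables (R : realType) (N : nat) (e : rel 'I_N).



Lemma sum_edge (G : 'I_N * 'I_N -> R) :
  \sum_(p : edge e) G (val p) = \sum_(q | ((val q.1 < val q.2)%N && e q.1 q.2)) G q.
Proof.
rewrite [RHS](reindex_omap (val : edge e -> _) insub); last first.
  by move=> q Pq; rewrite insubT.
by apply: eq_bigl => -[q Pq] /=; rewrite insubT Pq /=; apply/esym/eqP.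
Qed.

Lemma sum_delta (a : 'I_N) (X : 'I_N -> R) : \sum_i (a == i)%:R * X i = X a.
Proof.
rewrite (bigD1 a) //= eqxx mul1r big1 ?addr0 // => j /negPf.
by rewrite eq_sym => ->; rewrite mul0r.
Qed.

Lemma sum_deg (h : 'I_N -> R) :
  (forall i j, e i j = e j i) -> (forall i, ~~ e i i) ->
  \sum_(p : edge e) (h (val p).1 + h (val p).2) = \sum_i (degree e i)%:R * h i.
Proof.
move=> esym eirr.
rewrite (sum_edge (fun q => h q.1 + h q.2)) big_mkcond /=.
rewrite -(pair_bigA _ (fun i j => if ((val i < val j)%N && e i j) then h i + h j else 0)) /=.
have -> : \sum_i \sum_j (if ((val i < val j)%N && e i j) then h i + h j else 0)
   = \sum_i \sum_j ((((val i < val j)%N && e i j))%:R * h i)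
     + \sum_i \sum_j ((((val i < val j)%N && e i j))%:R * h j).
  rewrite -big_split; apply: eq_bigr => i _; rewrite -big_split; apply: eq_bigr => j _.
  by case: ((\val i < \val j)%N && e i j); rewrite /= ?mul1r ?mul0r ?addr0.
rewrite [X in _ + X]exchange_big /= -big_split; apply: eq_bigr => i _.
rewrite -big_split /= /degree.
rewrite mulr_natl -sumr_const [RHS]big_mkcond /=; apply: eq_bigr => j _.
rewrite -mulrDl inE.
case: (ltngtP (val i) (val j)) => /= [ij|ji|/val_inj ->].
- by rewrite addr0; case: (e i j); rewrite ?mul1r ?mul0r.
- by rewrite esym add0r; case: (e i j); rewrite ?mul1r ?mul0r.
- by rewrite (negPf (eirr j)) addr0 mul0r.
Qed.

End Sums.

Section Sums2.
Variables (R : realType) (N n : nat) (e : rel 'I_N).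

Lemma sum_cc (X : 'I_N -> edge e -> R) :
  \sum_i \sum_p cc i p * X i p = \sum_p (X (val p).1 p - X (val p).2 p).
Proof.
rewrite exchange_big /=; apply: eq_bigr => p _.
rewrite /cc (eq_bigr (fun i => ((val p).1 == i)%:R * X i p - ((val p).2 == i)%:R * X i p)).
  by rewrite sumrB !(sum_delta _ (fun i => X i p)).
by move=> i _; rewrite mulrBl.
Qed.

Lemma edge_id (a1 a2 b1 b2 x : 'rV[R]_n) :
  dotv (a1 - b2) (x - a1) - dotv (b1 - a2) (x - a2)
  = dotv (b1 - x) (b2 - x) - dotv (a1 - x) (a2 - x) - dotv (a1 - b1) (a2 - b2)
    - sqnorm (a1 - a2).
Proof.
rewrite /sqnorm !dotvBl !dotvBr.
rewrite ?(dotvC a2 a1) ?(dotvC b1 a1) ?(dotvC b2 a1) ?(dotvC x a1) ?(dotvC b1 a2)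
  ?(dotvC b2 a2) ?(dotvC x a2) ?(dotvC b2 b1) ?(dotvC x b1) ?(dotvC x b2).
ring.
Qed.

Lemma G1dagE (rho : R) (P : 'I_N -> 'M[R]_n) (U : 'I_N -> 'rV[R]_n) :
  (forall i j, e i j = e j i) -> (forall i, ~~ e i i) ->
  G1dag_q e rho P U = \sum_i qf (P i) (U i)
     + 2 * rho * \sum_(p : edge e) dotv (U (val p).1) (U (val p).2).
Proof.
move=> esym eirr.
rewrite /G1dag_q big_split /=.
have -> : \sum_i rho * (degree e i)%:R * sqnorm (U i)
   = rho * \sum_(p : edge e) (sqnorm (U (val p).1) + sqnorm (U (val p).2)).
  rewrite (sum_deg (fun i => sqnorm (U i))) // mulr_sumr.
  by apply: eq_bigr => i _; rewrite mulrA.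
rewrite /sqnormE /Aop.
have -> : \sum_(p : edge e) sqnorm (U (val p).1 - U (val p).2)
   = \sum_(p : edge e) (sqnorm (U (val p).1) + sqnorm (U (val p).2))
     - 2 * \sum_(p : edge e) dotv (U (val p).1) (U (val p).2).
  rewrite mulr_sumr -sumrB; apply: eq_bigr => p _; rewrite sqnormB; ring.
ring.
Qed.

End Sums2.


Lemma amgm (R : realType) (mu c s w : R) : 0 < mu ->
  c * s * w <= mu / 2 * w ^+ 2 + c ^+ 2 / (2 * mu) * s ^+ 2.
Proof.
move=> mu0.
have H : 0 <= mu / 2 * (w - c * s / mu) ^+ 2 by rewrite mulr_ge0 // ?sqr_ge0 // divr_ge0 // ltW.
apply: le_trans (_ : _ <= c * s * w + mu / 2 * (w - c * s / mu) ^+ 2) _; first lra.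
rewrite le_eqVlt; apply/orP; left; apply/eqP; field.
by rewrite gt_eqF.
Qed.

Section Main.
Variables (R : realType) (N n : nat) (e : rel 'I_N)
  (f : 'I_N -> 'rV[R]_n * 'rV[R]_n -> R)
  (gc gh : 'I_N -> 'rV[R]_n * 'rV[R]_n -> 'rV[R]_n)
  (C : 'I_N -> R) (mu1 mu2 m rho gamma : R)
  (P Q : 'I_N -> 'M[R]_n)
  (Wcs Whs : 'I_N -> 'rV[R]_n) (lams : edge e -> 'rV[R]_n)
  (Wc Wh : nat -> 'I_N -> 'rV[R]_n) (lam : nat -> edge e -> 'rV[R]_n).
Hypotheses (esym : forall i j, e i j = e j i) (eirr : forall i, ~~ e i i)
  (hg : forall i, has_gradient (f i) (gc i) (gh i))
  (cvx : forall i, jointly_convex (f i))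
  (Lip : forall i, grad_lipschitz (gc i) (gh i) (C i))
  (mu1ge : 0 <= mu1) (mu2gt : 0 < mu2) (mgt : 0 < m) (mle : m <= mu2) (rhogt : 0 < rho)
  (sP : forall i, (P i)^T = P i) (sQ : forall i, (Q i)^T = Q i)
  (Afeas : forall p, Aop e Wcs p = 0)
  (G1pos : forall W : 'I_N -> 'rV[R]_n, (exists i, W i != 0) -> 0 < G1dag_q e rho P W)
  (G23 : forall W : 'I_N -> 'rV[R]_n, (exists i, W i != 0) -> G3_q C m W < G2_q Q W)
  (gam0 : 0 < gamma) (gam2 : gamma < 2)
  (lam0 : lam 0%N = (fun _ => 0))
  (Hx : forall k i (x : 'rV[R]_n),
     Lrho e f mu1 mu2 rho (upd (Wc k) i (Wc k.+1 i)) (Wh k) (lam k)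
       + qf (P i) (Wc k.+1 i - Wc k i) / 2
     <= Lrho e f mu1 mu2 rho (upd (Wc k) i x) (Wh k) (lam k)
       + qf (P i) (x - Wc k i) / 2)
  (Hl : forall k, lam k.+1 = (fun p => lam k p - (gamma * rho) *: Aop e (Wc k.+1) p))
  (Hy : forall k i (y : 'rV[R]_n),
     Floc f mu1 mu2 i (Wc k.+1 i, Wh k.+1 i) + qf (Q i) (Wh k.+1 i - Wh k i) / 2
     <= Floc f mu1 mu2 i (Wc k.+1 i, y) + qf (Q i) (y - Wh k i) / 2).

Lemma QG3 i (v : 'rV[R]_n) : C i / m * (C i + m) * sqnorm v <= qf (Q i) v.
Proof.
have [->|v0] := eqVneq v 0; first by rewrite sqnorm0 qf0 mulr0.
pose W := fun j => if j == i then v else 0.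
have H : G3_q C m W < G2_q Q W by apply: G23; exists i; rewrite /W eqxx.
move: H; rewrite /G3_q /G2_q.
rewrite (bigD1 i) //= [X in _ < X](bigD1 i) //= /W eqxx.
rewrite big1; last by move=> j /negPf ->; rewrite sqnorm0 mulr0.
rewrite big1; last by move=> j /negPf ->; rewrite qf0.
by rewrite !addr0 => H; apply/ltW.
Qed.

Lemma node k i :
  Floc f mu1 mu2 i (Wc k.+1 i, Wh k.+1 i) - Floc f mu1 mu2 i (Wcs i, Whs i) <=
  - (\sum_p cc i p * dotv (lam k p) (Wcs i - Wc k.+1 i))
  + rho * \sum_p cc i p * dotv (Aop e (upd (Wc k) i (Wc k.+1 i)) p) (Wcs i - Wc k.+1 i)
  + bf (P i) (Wc k.+1 i - Wc k i) (Wcs i - Wc k.+1 i)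
  + (qf (Q i) (Wh k i - Whs i) - qf (Q i) (Wh k.+1 i - Whs i)) / 2.
Proof.
have X := xstep (e:=e) (mu2:=mu2) (xi:=Wc k.+1 i) (Wcs i - Wc k.+1 i) (hg i) (sP i) (Hx k i).
have Yst := ystep (mu1:=mu1) (x:=Wc k.+1 i) (y:=Wh k i) (y':=Wh k.+1 i) (- (Wh k.+1 i - Whs i)) (hg i) (sQ i) (Hy k i).
have Dsc := descent_y (hg i) (Wc k.+1 i) (Wh k i) (Wh k.+1 i) (Lip i).
have Cv := grad_conv (hg i) (cvx i) (Wc k.+1 i, Wh k i) (Wcs i, Whs i).
have Lp := lip_dot (Wc k.+1 i, Wh k i) (Wc k.+1 i, Wh k.+1 i) (Wh k.+1 i - Whs i) (Lip i).
have Qg := QG3 i (Wh k.+1 i - Wh k i).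
have T3 := threept (Wh k.+1 i) (Wh k i) (Whs i) (sQ i).
rewrite /= subrr sqnorm0 add0r sqnormBC in Lp.
have sD2 : Num.sqrt (sqnorm (Wh k.+1 i - Wh k i)) ^+ 2 = sqnorm (Wh k.+1 i - Wh k i).
  by rewrite sqr_sqrtr // sqnorm_ge0.
have sw2 : Num.sqrt (sqnorm (Wh k.+1 i - Whs i)) ^+ 2 = sqnorm (Wh k.+1 i - Whs i).
  by rewrite sqr_sqrtr // sqnorm_ge0.
have AM := amgm (C i) (Num.sqrt (sqnorm (Wh k.+1 i - Wh k i))) (Num.sqrt (sqnorm (Wh k.+1 i - Whs i))) mu2gt.
rewrite sD2 sw2 in AM.
have CC : C i ^+ 2 / (2 * mu2) <= C i ^+ 2 / m / 2.
  rewrite -mulrA -invfM [m * 2]mulrC.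
  rewrite ler_pdivrMr ?mulr_gt0 // mulrAC ler_pdivlMr ?mulr_gt0 //.
  by rewrite ler_wpM2l ?sqr_ge0 // ler_pM2l.
have CCs : C i ^+ 2 / (2 * mu2) * sqnorm (Wh k.+1 i - Wh k i)
        <= C i ^+ 2 / m / 2 * sqnorm (Wh k.+1 i - Wh k i).
  by rewrite ler_wpM2r // sqnorm_ge0.
have G3E : C i / m * (C i + m) = C i ^+ 2 / m + C i by field; rewrite gt_eqF.
rewrite G3E in Qg.
have M1 : 0 <= mu1 * sqnorm (Wc k.+1 i - Wcs i) by rewrite mulr_ge0 // sqnorm_ge0.
rewrite sqnormB in M1.
have W2 := sqnormB (Wh k.+1 i) (Whs i).
move: X Yst Dsc Cv Lp Qg T3 M1 AM CCs W2.
rewrite /Floc /=.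
rewrite !dotvBr !dotvBl !dotvNr !dotvBr (bfNr _ _ (sQ i)).
rewrite -[dotv (Wc k.+1 i) (Wc k.+1 i)]/(sqnorm (Wc k.+1 i)).
rewrite -[dotv (Wh k.+1 i) (Wh k.+1 i)]/(sqnorm (Wh k.+1 i)).
set S1 := \sum_p _. set S2 := \sum_p _.
move=> h1 h2 h3 h4 h5 h6 h7 h8 h9 h10 h11.
have s1 : f i (Wc k.+1 i, Wh k.+1 i) - f i (Wcs i, Whs i) <= mu1 * (dotv (Wc k.+1 i) (Wcs i) - sqnorm (Wc k.+1 i)) - S1 + rho * S2 + bf (P i) (Wc k.+1 i - Wc k i) (Wcs i - Wc k.+1 i) + C i * Num.sqrt (sqnorm (Wh k.+1 i - Wh k i)) * Num.sqrt (sqnorm (Wh k.+1 i - Whs i)) + mu2 * - (sqnorm (Wh k.+1 i) - dotv (Wh k.+1 i) (Whs i)) - bf (Q i) (Wh k.+1 i - Wh k i) (Wh k.+1 i - Whs i) + C i / 2 * sqnorm (Wh k.+1 i - Wh k i).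
  lra.
have s2 : C i * Num.sqrt (sqnorm (Wh k.+1 i - Wh k i)) * Num.sqrt (sqnorm (Wh k.+1 i - Whs i)) + C i / 2 * sqnorm (Wh k.+1 i - Wh k i) <= mu2 / 2 * sqnorm (Wh k.+1 i - Whs i) + qf (Q i) (Wh k.+1 i - Wh k i) / 2.
  move: h5 h6 h9 h10; set A := C i * _ * _; set s := sqnorm (Wh k.+1 i - Wh k i); set w := sqnorm (Wh k.+1 i - Whs i).
  set q := qf _ _; move=> h5 h6 h9 h10.
  have t1 : A <= mu2 / 2 * w + C i ^+ 2 / m / 2 * s by lra.
  have t2 : C i ^+ 2 / m / 2 * s + C i / 2 * s <= q / 2 by lra.
  lra.
have s3 : 2 * bf (Q i) (Wh k.+1 i - Wh k i) (Wh k.+1 i - Whs i) = qf (Q i) (Wh k.+1 i - Wh k i) + qf (Q i) (Wh k.+1 i - Whs i) - qf (Q i) (Wh k i - Whs i) by [].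
have u1 : mu1 * (dotv (Wc k.+1 i) (Wcs i) - sqnorm (Wc k.+1 i)) + mu1 / 2 * sqnorm (Wc k.+1 i) - mu1 / 2 * sqnorm (Wcs i) <= 0 by lra.
have u2 : mu2 * - (sqnorm (Wh k.+1 i) - dotv (Wh k.+1 i) (Whs i)) + mu2 / 2 * sqnorm (Wh k.+1 i) - mu2 / 2 * sqnorm (Whs i) + mu2 / 2 * sqnorm (Wh k.+1 i - Whs i) = 0 by rewrite h11; field.
lra.
Qed.


Lemma edge_neq (p : edge e) : (val p).2 != (val p).1.
Proof.
apply/negP => /eqP E; have := valP p; rewrite E ltnn //.
Qed.

Lemma Aop_upd1 (W : 'I_N -> 'rV[R]_n) x (p : edge e) :
  Aop e (upd W (val p).1 x) p = x - W (val p).2.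
Proof. by rewrite /Aop /upd eqxx (negPf (edge_neq p)). Qed.

Lemma Aop_upd2 (W : 'I_N -> 'rV[R]_n) x (p : edge e) :
  Aop e (upd W (val p).2 x) p = W (val p).1 - x.
Proof. by rewrite /Aop /upd eqxx eq_sym (negPf (edge_neq p)). Qed.

Lemma xs_eq (p : edge e) : Wcs (val p).2 = Wcs (val p).1.
Proof. by have := Afeas p; rewrite /Aop => /eqP; rewrite subr_eq0 => /eqP ->. Qed.

Lemma G1nn W : 0 <= G1dag_q e rho P W.
Proof.
case: (pselect (exists i, W i != 0)) => [h|h]; first exact/ltW/G1pos.
have W0 : forall i, W i = 0.
  by move=> i; apply/eqP; apply/negP => /negP Wi; apply: h; exists i.
rewrite /G1dag_q /sqnormE /Aop !big1 ?mulr0 ?subr0 //.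
- by move=> p _; rewrite !W0 subrr sqnorm0.
- by move=> i _; rewrite W0 sqnorm0 qf0 mulr0 addr0.
Qed.

Lemma sqnormE_ge0 (u : edge e -> 'rV[R]_n) : 0 <= sqnormE e u.
Proof. by apply: sumr_ge0 => p _; exact: sqnorm_ge0. Qed.

Definition Phi k := G1dag_q e rho P (fun i => Wc k i - Wcs i) / 2
  + G2_q Q (fun i => Wh k i - Whs i) / 2 + sqnormE e (lam k) / (2 * gamma * rho).

Lemma PI k : Ftot f mu1 mu2 (Wc k.+1) (Wh k.+1) - Ftot f mu1 mu2 Wcs Whs <= Phi k - Phi k.+1.
Proof.
rewrite /Ftot -sumrB.
apply: le_trans (ler_sum _ (fun i _ => node k i)) _.
rewrite !big_split /= sumrN -!mulr_sumr -mulr_suml sumrB.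
rewrite !sum_cc.
have EL : \sum_p (dotv (lam k p) (Wcs (val p).1 - Wc k.+1 (val p).1)
                 - dotv (lam k p) (Wcs (val p).2 - Wc k.+1 (val p).2))
          = - dotE e (lam k) (Aop e (Wc k.+1)).
  rewrite /dotE -sumrN; apply: eq_bigr => p _.
  rewrite -dotvBr -dotvNr /Aop xs_eq; congr dotv.
  by rewrite !opprB addrC addrA subrK.
rewrite EL opprK.
have EA : \sum_p (dotv (Aop e (upd (Wc k) (val p).1 (Wc k.+1 (val p).1)) p)
                       (Wcs (val p).1 - Wc k.+1 (val p).1)
               - dotv (Aop e (upd (Wc k) (val p).2 (Wc k.+1 (val p).2)) p)
                       (Wcs (val p).2 - Wc k.+1 (val p).2))
   = \sum_(p : edge e) dotv (Wc k (val p).1 - Wcs (val p).1) (Wc k (val p).2 - Wcs (val p).2)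
   - \sum_(p : edge e) dotv (Wc k.+1 (val p).1 - Wcs (val p).1) (Wc k.+1 (val p).2 - Wcs (val p).2)
   - \sum_(p : edge e) dotv (Wc k.+1 (val p).1 - Wc k (val p).1) (Wc k.+1 (val p).2 - Wc k (val p).2)
   - sqnormE e (Aop e (Wc k.+1)).
  rewrite /sqnormE -!sumrB; apply: eq_bigr => p _.
  rewrite Aop_upd1 Aop_upd2 !xs_eq edge_id /Aop.
  by [].
rewrite EA.
have EP : \sum_i bf (P i) (Wc k.+1 i - Wc k i) (Wcs i - Wc k.+1 i)
   = (\sum_i qf (P i) (Wc k i - Wcs i) - \sum_i qf (P i) (Wc k.+1 i - Wcs i)) / 2
     - (\sum_i qf (P i) (Wc k.+1 i - Wc k i)) / 2.
  rewrite -sumrB !mulr_suml -sumrB; apply: eq_bigr => i _.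
  have := threept (Wc k.+1 i) (Wc k i) (Wcs i) (sP i).
  have -> : Wcs i - Wc k.+1 i = - (Wc k.+1 i - Wcs i) by rewrite opprB.
  rewrite (bfNr _ _ (sP i)) => h; lra.
rewrite EP.
have EL2 : sqnormE e (lam k.+1) = sqnormE e (lam k)
   - 2 * (gamma * rho) * dotE e (lam k) (Aop e (Wc k.+1))
   + (gamma * rho) ^+ 2 * sqnormE e (Aop e (Wc k.+1)).
  rewrite Hl /sqnormE /dotE mulr_sumr mulr_sumr -sumrB -big_split; apply: eq_bigr => p _.
  by rewrite sqnormB sqnormZ dotvZr mulrA.
have gr : 0 < gamma * rho by rewrite mulr_gt0.
have EL3 : (sqnormE e (lam k) - sqnormE e (lam k.+1)) / (2 * gamma * rho)
   = dotE e (lam k) (Aop e (Wc k.+1)) - gamma * rho / 2 * sqnormE e (Aop e (Wc k.+1)).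
  rewrite EL2; field; by rewrite ?(gt_eqF gam0) ?(gt_eqF rhogt).
have G1a := G1nn (fun i => Wc k.+1 i - Wc k i).
rewrite (G1dagE _ _ _ esym eirr) /= in G1a.
have sA := sqnormE_ge0 (Aop e (Wc k.+1)).
have sA2 : 0 <= (1 - gamma / 2) * rho * sqnormE e (Aop e (Wc k.+1)).
  have g2 : 0 <= 1 - gamma / 2 by have := gam2; lra.
  by apply: mulr_ge0; [apply: mulr_ge0; [exact: g2 | exact: ltW] | exact: sA].
rewrite /Phi !(G1dagE _ _ _ esym eirr) /G2_q.
move: EL3 G1a sA2.
set LK := sqnormE e (lam k). set LK1 := sqnormE e (lam k.+1).
set DL := dotE e _ _. set SA := sqnormE e _.
move=> EL3 G1a sA2.
have EL4 : LK / (2 * gamma * rho) - LK1 / (2 * gamma * rho) = DL - gamma * rho / 2 * SA.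
  by rewrite -EL3 mulrBl.
lra.
Qed.

Lemma Cnn (v : 'rV[R]_n) j : v != 0 -> 0 <= C j.
Proof.
move=> v0.
have := Lip j (v, 0) (0, 0); rewrite /= !subr0 sqnorm0 !addr0.
have sv : 0 < sqnorm v.
  rewrite lt_def sqnorm_ge0 andbT; apply/negP => /eqP /sqnorm_eq0 h.
  by rewrite h eqxx in v0.
have s0 : 0 < Num.sqrt (sqnorm v) by rewrite sqrtr_gt0.
move=> h; have : 0 <= C j * Num.sqrt (sqnorm v).
  by apply: le_trans h; exact: sqrtr_ge0.
by rewrite pmulr_lge0.
Qed.

Lemma G2nn W : 0 <= G2_q Q W.
Proof.
case: (pselect (exists i, W i != 0)) => [h|h].
  apply: le_trans (ltW (G23 h)); case: h => i /Cnn Ci.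
  apply: sumr_ge0 => j _; apply: mulr_ge0; last exact: sqnorm_ge0.
  have := Ci j => c0; apply: mulr_ge0; first by apply: divr_ge0 => //; exact: ltW.
  by apply: addr_ge0 => //; exact: ltW.
have W0 : forall i, W i = 0.
  by move=> i; apply/eqP; apply/negP => /negP Wi; apply: h; exists i.
by rewrite /G2_q big1 // => i _; rewrite W0 qf0.
Qed.

Lemma Phi_ge0 k : 0 <= Phi k.
Proof.
rewrite /Phi; apply: addr_ge0; first apply: addr_ge0.
- by apply: divr_ge0 => //; exact: G1nn.
- by apply: divr_ge0 => //; exact: G2nn.
- by apply: divr_ge0; [exact: sqnormE_ge0 | rewrite !mulr_ge0 // ltW].
Qed.

Lemma tele K : \sum_(1 <= j < K.+1) (Ftot f mu1 mu2 (Wc j) (Wh j) - Ftot f mu1 mu2 Wcs Whs)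
   <= Phi 0 - Phi K.
Proof.
elim: K => [|K IH]; first by rewrite big_geq // subrr.
rewrite big_nat_recr //=.
have := PI K; lra.
Qed.

Lemma sqnorm_conv (u v : 'rV[R]_n) t : 0 <= t -> t <= 1 ->
  sqnorm (t *: u + (1 - t) *: v) <= t * sqnorm u + (1 - t) * sqnorm v.
Proof.
move=> t0 t1.
have h : 0 <= t * (1 - t) * sqnorm (u - v).
  by rewrite !mulr_ge0 ?sqnorm_ge0 // subr_ge0.
move: h; rewrite (sqnormD (t *: u)) !sqnormZ dotvZl dotvZr sqnormB.
move=> h; nra.
Qed.

Lemma Ftot_conv (U1 V1 U2 V2 : 'I_N -> 'rV[R]_n) t : 0 <= t -> t <= 1 ->
  Ftot f mu1 mu2 (fun i => t *: U1 i + (1 - t) *: U2 i) (fun i => t *: V1 i + (1 - t) *: V2 i)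
  <= t * Ftot f mu1 mu2 U1 V1 + (1 - t) * Ftot f mu1 mu2 U2 V2.
Proof.
move=> t0 t1.
rewrite /Ftot !mulr_sumr -big_split /=; apply: ler_sum => i _.
rewrite /Floc /=.
have := cvx i (U1 i, V1 i) (U2 i, V2 i) t0 t1.
have -> : t *: (U1 i, V1 i) + (1 - t) *: (U2 i, V2 i)
   = (t *: U1 i + (1 - t) *: U2 i, t *: V1 i + (1 - t) *: V2 i) by [].
have c1 := sqnorm_conv (U1 i) (U2 i) t0 t1.
have c2 := sqnorm_conv (V1 i) (V2 i) t0 t1.
have m1 : mu1 / 2 * sqnorm (t *: U1 i + (1 - t) *: U2 i)
      <= mu1 / 2 * (t * sqnorm (U1 i) + (1 - t) * sqnorm (U2 i)).
  by rewrite ler_wpM2l // divr_ge0.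
have m2 : mu2 / 2 * sqnorm (t *: V1 i + (1 - t) *: V2 i)
      <= mu2 / 2 * (t * sqnorm (V1 i) + (1 - t) * sqnorm (V2 i)).
  by rewrite ler_wpM2l // divr_ge0 // ltW.
move=> h; nra.
Qed.

Lemma avgS (W : nat -> 'I_N -> 'rV[R]_n) K : (1 <= K)%N ->
  avg W K.+1 = (fun i => (K%:R / K.+1%:R) *: avg W K i + (1 - K%:R / K.+1%:R) *: W K.+1 i).
Proof.
move=> K1; apply/funext => i; rewrite /avg.
rewrite big_nat_recr //= scalerDr scalerA.
have K0 : K%:R != 0 :> R by rewrite pnatr_eq0 -lt0n.
have K10 : K.+1%:R != 0 :> R by rewrite pnatr_eq0.
congr (_ + _); last by congr (_ *: _); field.
have E : K%:R / K.+1%:R / K%:R = K.+1%:R^-1 :> R.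
  by field; rewrite nat1r K10 K0.
by rewrite E.
Qed.

Lemma jensen K : (1 <= K)%N ->
  K%:R * Ftot f mu1 mu2 (avg Wc K) (avg Wh K)
  <= \sum_(1 <= j < K.+1) Ftot f mu1 mu2 (Wc j) (Wh j).
Proof.
elim: K => [//|K IH] K1.
case: (posnP K) => [K0|Kp].
  subst K; rewrite big_nat1 mul1r.
  have E : forall W : nat -> 'I_N -> 'rV[R]_n, avg W 1 = W 1%N.
    by move=> W; apply/funext => i; rewrite /avg big_nat1 invr1 scale1r.
  by rewrite !E.
rewrite (avgS _ Kp) (avgS _ Kp) big_nat_recr //=.
set t := K%:R / K.+1%:R.
have t0 : 0 <= t by rewrite divr_ge0.
have t1 : t <= 1 by rewrite ler_pdivrMr ?ltr0Sn // mul1r ler_nat.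
have := Ftot_conv (avg Wc K) (avg Wh K) (Wc K.+1) (Wh K.+1) t0 t1.
have := IH Kp.
have Et : K.+1%:R * t = K%:R by rewrite /t mulrC -mulrA mulVf ?mulr1 // pnatr_eq0.
have Et1 : K.+1%:R * (1 - t) = 1 by rewrite mulrBr Et mulr1 -natrB // subSnn.
move=> h1 h2.
have h3 := ler_wpM2l (ler0n R K.+1) h2.
rewrite mulrDr (mulrA K.+1%:R t) (mulrA K.+1%:R (1 - t)) Et Et1 mul1r in h3.
lra.
Qed.

Lemma final k : (1 <= k)%N ->
  Ftot f mu1 mu2 (avg Wc k) (avg Wh k) - Ftot f mu1 mu2 Wcs Whs
    <= (2 * k%:R)^-1 * (G1dag_q e rho P (fun i => Wc 0%N i - Wcs i)
                       + G2_q Q (fun i => Wh 0%N i - Whs i)).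
Proof.
move=> k1.
have J := jensen k1. have T := tele k. have Pk := Phi_ge0 k.
have P0 : Phi 0 = (G1dag_q e rho P (fun i => Wc 0%N i - Wcs i)
                       + G2_q Q (fun i => Wh 0%N i - Whs i)) / 2.
  rewrite /Phi lam0 /sqnormE big1 ?mul0r ?addr0 ?mulrDl //.
  by move=> p _; rewrite sqnorm0.
rewrite sumrB sumr_const_nat subn1 /= -mulr_natl in T.
have kp : 0 < k%:R :> R by rewrite ltr0n.
rewrite -(ler_pM2l kp).
have -> : k%:R * ((2 * k%:R)^-1 * (G1dag_q e rho P (fun i => Wc 0%N i - Wcs i)
                       + G2_q Q (fun i => Wh 0%N i - Whs i)))
   = (G1dag_q e rho P (fun i => Wc 0%N i - Wcs i)
                       + G2_q Q (fun i => Wh 0%N i - Whs i)) / 2.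
  by field; rewrite gt_eqF.
rewrite -P0 mulrBr.
lra.
Qed.

End Main.

Unset Implicit Arguments. Set Strict Implicit.

Theorem corollary1 (R : realType) (N n : nat) (e : rel 'I_N)
  (f : 'I_N -> 'rV[R]_n * 'rV[R]_n -> R)
  (gc gh : 'I_N -> 'rV[R]_n * 'rV[R]_n -> 'rV[R]_n)
  (C : 'I_N -> R) (mu1 mu2 m rho gamma : R)
  (P Q : 'I_N -> 'M[R]_n)
  (Wcs Whs : 'I_N -> 'rV[R]_n) (lams : edge e -> 'rV[R]_n)
  (Wc Wh : nat -> 'I_N -> 'rV[R]_n) (lam : nat -> edge e -> 'rV[R]_n) :
  (2 <= N)%N ->
  (forall i j, e i j = e j i) -> (forall i, ~~ e i i) ->
  (forall i j, connect e i j) ->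
  (forall i, has_gradient (f i) (gc i) (gh i)) ->
  (forall i, jointly_convex (f i)) ->
  (forall i, grad_lipschitz (gc i) (gh i) (C i)) ->
  0 <= mu1 -> 0 < mu2 -> 0 < m -> m <= mu2 -> 0 < rho ->
  (forall i, (P i)^T = P i) -> (forall i, (Q i)^T = Q i) ->
  (forall p, Aop e Wcs p = 0) ->
  (forall i, ATop e lams i = gc i (Wcs i, Whs i) + mu1 *: Wcs i) ->
  (forall i, gh i (Wcs i, Whs i) + mu2 *: Whs i = 0) ->
  (forall W : 'I_N -> 'rV[R]_n, (exists i, W i != 0) -> 0 < G1dag_q e rho P W) ->
  (forall W : 'I_N -> 'rV[R]_n, (exists i, W i != 0) -> G3_q C m W < G2_q Q W) ->
  0 < gamma -> gamma < 2 ->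
  lam 0%N = (fun _ => 0) ->
  (forall k i (x : 'rV[R]_n),
     Lrho e f mu1 mu2 rho (upd (Wc k) i (Wc k.+1 i)) (Wh k) (lam k)
       + qf (P i) (Wc k.+1 i - Wc k i) / 2
     <= Lrho e f mu1 mu2 rho (upd (Wc k) i x) (Wh k) (lam k)
       + qf (P i) (x - Wc k i) / 2) ->
  (forall k, lam k.+1 = (fun p => lam k p - (gamma * rho) *: Aop e (Wc k.+1) p)) ->
  (forall k i (y : 'rV[R]_n),
     Floc f mu1 mu2 i (Wc k.+1 i, Wh k.+1 i) + qf (Q i) (Wh k.+1 i - Wh k i) / 2
     <= Floc f mu1 mu2 i (Wc k.+1 i, y) + qf (Q i) (y - Wh k i) / 2) ->
  forall k : nat, (1 <= k)%N ->
    Ftot f mu1 mu2 (avg Wc k) (avg Wh k) - Ftot f mu1 mu2 Wcs Whs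
    <= (2 * k%:R)^-1 * (G1dag_q e rho P (fun i => Wc 0%N i - Wcs i)
                       + G2_q Q (fun i => Wh 0%N i - Whs i)).
Proof.
move=> _ esym eirr _ hg cvx Lip mu1ge mu2gt mgt mle rhogt sP sQ Afeas _ _ G1pos G23
  gam0 gam2 lam0 Hx Hl Hy k k1.
exact: (final Whs esym eirr hg cvx Lip mu1ge mu2gt mgt mle rhogt sP sQ Afeas G1pos G23
  gam0 gam2 lam0 Hx Hl Hy k1).
Qed.
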